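(* The product in $\mathbf{Sys}(L)$ of a set-indexed family of sober affine systems is sober.
   Context: Fix a variety $\mathbf{A}$ of algebras (full subcategory of the category of $\Omega$-algebras and homomorphisms closed under products, subalgebras and homomorphic images) having set-indexed coproducts $(A_i\xrightarrow{\mu_i}\coprod_iA_i)_i$. Fix an $\mathbf{A}$-algebra $L$; $L^X$ is the power algebra. An affine system is $(X,\kappa,A)$ with $X$ a set, $A$ an algebra, $\kappa:A\to L^X$ a homomorphism; a morphism $(f,\varphi):(X_1,\kappa_1,A_1)\to(X_2,\kappa_2,A_2)$ is a map $f:X_1\to X_2$ with a homomorphism $\varphi:A_2\to A_1$ such that $\kappa_1(\varphi(a))(x)=\kappa_2(a)(f(x))$; this is $\mathbf{Sys}(L)$. For an algebra $A$, $Pt_L(A)$ is the set of homomorphisms $A\to L$; for a system $(X,\kappa,A)$, $\ell:X\to Pt_L(A)$ is $\ell(x)(a)=\kappa(a)(x)$, and the system is sober if $\ell$ is bijective. The product of $(X_i,\kappa_i,A_i)_{i\in I}$ is $(\prod_iX_i,\kappa,\coprod_iA_i)$ with projections $(\pi_i,\mu_i)$, where $\kappa$ is the unique homomorphism with $\kappa(\mu_i(a))(x)=\kappa_i(a)(x_i)$. *)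

(* Defs.v *)
From mathcomp Require Import ssreflect ssrfun ssrbool.
Set Implicit Arguments.
Unset Strict Implicit.

(* A signature Omega: a type of operation symbols, each with an arity
   (an arbitrary type, so infinitary operations are allowed too). *)
Record signature := Signature { op : Type; arity : op -> Type }.
Arguments arity : clear implicits.

Record algebra (S : signature) := Algebra {
  carrier :> Type;
  interp : forall o : op S, (arity S o -> carrier) -> carrier }.
Arguments interp {S} a o _.

Definition is_hom (S : signature) (A B : algebra S) (f : A -> B) : Prop :=
  forall (o : op S) (args : arity S o -> A),
    f (interp A o args) = interp B o (fun k => f (args k)).

Record hom (S : signature) (A B : algebra S) := Hom {
  hom_fun :> A -> B;
  hom_morph : is_hom hom_fun }.

Definition prod_alg (S : signature) (I : Type) (F : I -> algebra S) : algebra S :=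
  @Algebra S (forall i, F i)
    (fun o args => fun i => interp (F i) o (fun k => args k i)).

Definition pow_alg (S : signature) (L : algebra S) (X : Type) : algebra S :=
  prod_alg (fun _ : X => L).

Definition op_closed (S : signature) (A : algebra S) (P : A -> Prop) : Prop :=
  forall (o : op S) (args : arity S o -> A),
    (forall k, P (args k)) -> P (interp A o args).

Definition sub_alg (S : signature) (A : algebra S) (P : A -> Prop)
  (HP : op_closed P) : algebra S :=
  @Algebra S {x : A | P x}
    (fun o args => exist P (interp A o (fun k => proj1_sig (args k)))
                     (HP o _ (fun k => proj2_sig (args k)))).

Definition is_variety (S : signature) (V : algebra S -> Prop) : Prop :=
  [/\ (forall (I : Type) (F : I -> algebra S), (forall i, V (F i)) -> V (prod_alg F)),
      (forall (A : algebra S) (P : A -> Prop) (HP : op_closed P),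
          V A -> V (sub_alg HP)) &
      (forall (A B : algebra S) (f : hom A B),
          (forall b : B, exists a : A, f a = b) -> V A -> V B)].

Definition is_coproduct (S : signature) (V : algebra S -> Prop) (I : Type)
  (F : I -> algebra S) (C : algebra S) (mu : forall i, hom (F i) C) : Prop :=
  V C /\
  forall (D : algebra S), V D -> forall (g : forall i, hom (F i) D),
    exists h : hom C D,
      (forall i (a : F i), h (mu i a) = g i a) /\
      (forall h' : hom C D, (forall i (a : F i), h' (mu i a) = g i a) ->
         forall c : C, h' c = h c).

Arguments is_coproduct {S} V {I} F C mu.

Definition has_coproducts (S : signature) (V : algebra S -> Prop) : Prop :=
  forall (I : Type) (F : I -> algebra S), (forall i, V (F i)) ->
    exists (C : algebra S) (mu : forall i, hom (F i) C), is_coproduct V F C mu.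

Record system (S : signature) (L : algebra S) := System {
  pts : Type;
  alg : algebra S;
  kappa : hom alg (pow_alg L pts) }.
Arguments System {S L pts alg} kappa.

Definition Pt (S : signature) (L A : algebra S) : Type := hom A L.

Lemma ell_is_hom (S : signature) (L : algebra S) (s : system L) (x : pts s) :
  is_hom (fun a : alg s => kappa s a x).
Proof.
move=> o args; by rewrite (hom_morph (kappa s)).
Qed.

Definition ell (S : signature) (L : algebra S) (s : system L) (x : pts s) :
  Pt L (alg s) := Hom (@ell_is_hom S L s x).

Definition sober (S : signature) (L : algebra S) (s : system L) : Prop :=
  bijective (@ell S L s).

(* Main.v *)
Require Import Defs.
From mathcomp Require Import ssreflect ssrfun ssrbool.
From Stdlib Require Import ClassicalEpsilon FunctionalExtensionality ProofIrrelevance.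

Lemma hom_ext (S : signature) (A B : algebra S) (f g : hom A B) :
  (forall a, f a = g a) -> f = g.
Proof.
case: f => f fh; case: g => g gh /= H.
have E : f = g by apply: functional_extensionality.
subst g; by rewrite (proof_irrelevance _ fh gh).
Qed.

Definition comp_hom (S : signature) (A B D : algebra S) (p : hom B D) (m : hom A B) :
  hom A D.
Proof.
refine (@Hom S A D (fun a => p (m a)) _).
move=> o args; by rewrite (hom_morph m) (hom_morph p).
Defined.

Theorem proposition18 (S : signature) (V : algebra S -> Prop)
  (HV : is_variety V) (Hcoprod : has_coproducts V)
  (L : algebra S) (HL : V L)
  (I : Type) (s : I -> system L) (Hs : forall i, V (alg (s i)))
  (Hsober : forall i, sober (s i))
  (C : algebra S) (mu : forall i, hom (alg (s i)) C)
  (HC : is_coproduct V (fun i => alg (s i)) C mu)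
  (k : hom C (pow_alg L (forall i, pts (s i))))
  (Hk : forall i (a : alg (s i)) (x : forall j, pts (s j)),
          k (mu i a) x = kappa (s i) a (x i)) :
  sober (System k).
Proof.
have inj : injective (@ell S L (System k)).
  move=> x y Exy; apply: functional_extensionality_dep => i.
  have [gi gK _] := Hsober i.
  rewrite -(gK (x i)) -(gK (y i)); congr gi; apply: hom_ext => a /=.
  by rewrite -!Hk; move: (f_equal (fun h : hom _ _ => h (mu i a)) Exy).
have surj : forall p : Pt L C, exists x, @ell S L (System k) x = p.
  move=> p.
  have si : forall i, exists xi, @ell S L (s i) xi = @comp_hom S _ _ L p (mu i).
    move=> i; have [gi _ Kg] := Hsober i; by exists (gi (@comp_hom S _ _ L p (mu i))).
  pose x := fun i => proj1_sig (constructive_indefinite_description _ (si i)).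
  have Hx : forall i, @ell S L (s i) (x i) = @comp_hom S _ _ L p (mu i).
    move=> i; exact: proj2_sig (constructive_indefinite_description _ (si i)).
  exists x; apply: hom_ext => c.
  case: HC => _ /(_ L HL (fun i => @comp_hom S _ _ L p (mu i))) [h [_ Hu]].
  have Hp := Hu p (fun i a => erefl).
  have He := Hu (@ell S L (System k) x).
  rewrite He ?Hp // => i a /=.
  by rewrite Hk; move: (f_equal (fun h : hom _ _ => h a) (Hx i)).
pose g := fun p => proj1_sig (constructive_indefinite_description _ (surj p)).
have gP : forall p, @ell S L (System k) (g p) = p.
  move=> p; exact: proj2_sig (constructive_indefinite_description _ (surj p)).
exists g => [x|p]; last exact: gP.
by apply: inj; rewrite gP.
Qed.
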